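(* Let $\mathbb{F}$ be a field of characteristic not $2$ and let $\Phi: M_n(\mathbb{F}) \to M_r(\mathbb{F})$ be an additive Jordan homomorphism. Then $\Phi$ preserves double zero products, i.e. $\Phi(A)\Phi(B) = \Phi(B)\Phi(A) = 0$ whenever $AB = BA = 0$. If $\mathbb{F} = \mathbb{R}$ or $\mathbb{C}$, then moreover $\Phi(A)\Phi(B) = 0$ whenever $AB = 0$ and $A,B$ are both self-adjoint, or both symmetric.
   Context: An additive map $\Phi$ is a Jordan homomorphism if $\Phi(AB+BA) = \Phi(A)\Phi(B)+\Phi(B)\Phi(A)$ for all $A,B$. Self-adjoint means $A^*=A$ (conjugate transpose), symmetric means $A^{\mathrm t}=A$. *)

(* Defs.v *)
From HB Require Import structures.
From mathcomp Require Import all_boot all_order all_algebra.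
Set Implicit Arguments. Unset Strict Implicit. Unset Printing Implicit Defensive.
Import Order.TTheory GRing.Theory Num.Theory.
Local Open Scope ring_scope.

Definition additive_map (R : nzRingType) (n r : nat) (Phi : 'M[R]_n -> 'M[R]_r) :=
  forall A B, Phi (A + B) = Phi A + Phi B.

Definition jordan_hom (R : nzRingType) (n r : nat) (Phi : 'M[R]_n -> 'M[R]_r) :=
  forall A B, Phi (A *m B + B *m A) = Phi A *m Phi B + Phi B *m Phi A.

Definition adjmx (C : numClosedFieldType) (n : nat) (A : 'M[C]_n) : 'M[C]_n :=
  (map_mx Num.conj A)^T.

Definition self_adjoint (C : numClosedFieldType) (n : nat) (A : 'M[C]_n) :=
  adjmx A = A.

Definition symmetric_mx (R : nzRingType) (n : nat) (A : 'M[R]_n) := A^T = A.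

(* Main.v *)
Require Import Defs.
From HB Require Import structures.
From mathcomp Require Import all_boot all_order all_algebra.
From mathcomp Require Import ring.
Import Order.TTheory GRing.Theory Num.Theory.
Local Open Scope ring_scope.
Set Implicit Arguments. Unset Strict Implicit.

Lemma mul_col_row (R : fieldType) (m n p : nat) (N : 'M[R]_(m, n)) (Q : 'M[R]_(n, p)) :
  N *m Q = \sum_(k < n) (col k N *m row k Q).
Proof.
apply/matrixP=> i j; rewrite !mxE summxE; apply: eq_bigr => k _.
by rewrite !mxE big_ord1 !mxE.
Qed.

Lemma vdelta (R : fieldType) (n : nat) (v : 'rV[R]_n) (j : 'I_n) :
  v *m delta_mx j 0 = (v 0 j)%:M.
Proof.
rewrite -colE; apply/matrixP=> a b; rewrite !ord1 !mxE eqxx mulr1n.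
done.
Qed.

Section Jordan.
Variables (F : fieldType) (n r : nat) (Phi : 'M[F]_n -> 'M[F]_r).
Hypothesis two : (2%:R : F) != 0.
Hypothesis add : additive_map Phi.
Hypothesis jor : jordan_hom Phi.

Lemma Phi0 : Phi 0 = 0.
Proof. by apply: (addrI (Phi 0)); rewrite addr0 -add addr0. Qed.

Lemma PhiN X : Phi (- X) = - Phi X.
Proof. by apply: (addrI (Phi X)); rewrite -add !subrr Phi0. Qed.

Lemma PhiB X Y : Phi (X - Y) = Phi X - Phi Y.
Proof. by rewrite add PhiN. Qed.

Lemma Phi_sum m (G : 'I_m -> 'M[F]_n) : Phi (\sum_(i < m) G i) = \sum_(i < m) Phi (G i).
Proof. exact: (big_morph Phi add Phi0). Qed.

Lemma twice_inj (M N : 'M[F]_r) : M + M = N + N -> M = N.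
Proof.
move=> h.
have h2 : (2%:R : F) *: M = 2%:R *: N by rewrite !scaler_nat !mulr2n.
by rewrite -[M]scale1r -[N]scale1r -(mulVf two) -!scalerA h2.
Qed.

Lemma J2 X : Phi (X *m X) = Phi X *m Phi X.
Proof. by apply: twice_inj; rewrite -add jor. Qed.

Lemma alg m (X Y : 'M[F]_m) :
  X *m (X *m Y + Y *m X) + (X *m Y + Y *m X) *m X =
  (X *m X *m Y + Y *m (X *m X)) + (X *m Y *m X + X *m Y *m X).
Proof.
rewrite mulmxDr mulmxDl !mulmxA.
by rewrite [X *m Y *m X + _]addrC addrACA.
Qed.

Lemma J3 X Y : Phi (X *m Y *m X) = Phi X *m Phi Y *m Phi X.
Proof.
apply: twice_inj; rewrite -add.
have h1 := jor X (X *m Y + Y *m X). rewrite [Phi (X *m Y + Y *m X)]jor in h1.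
have h2 := jor (X *m X) Y. rewrite J2 in h2.
apply: (addrI (Phi (X *m X *m Y + Y *m (X *m X)))).
by rewrite -add -alg h1 h2 alg.
Qed.

Lemma anti A B : A *m B = 0 -> B *m A = 0 -> Phi A *m Phi B = - (Phi B *m Phi A).
Proof.
move=> hAB hBA; have h := jor A B; rewrite hAB hBA addr0 Phi0 in h.
by apply/eqP; rewrite -addr_eq0 -h.
Qed.

Lemma lemS D A B : D *m D = D -> D *m A *m D = A -> B *m D = 0 -> D *m B = 0 ->
  Phi A *m Phi B = 0.
Proof.
move=> hD hA hBD hDB.
have dd : Phi D *m Phi D = Phi D by rewrite -J2 hD.
have h : Phi B *m Phi D = - (Phi D *m Phi B) by exact: anti.
have e1 : Phi B *m Phi D = - (Phi D *m Phi B *m Phi D).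
  by rewrite -mulNmx -h -mulmxA dd.
have e2 : Phi D *m Phi B = - (Phi D *m (Phi B *m Phi D)).
  by rewrite h mulmxN opprK mulmxA dd.
have hbd : Phi D *m Phi B = Phi B *m Phi D by rewrite e2 mulmxA -e1.
have bd0 : Phi B *m Phi D = 0.
  by apply: twice_inj; rewrite addr0 {2}h hbd subrr.
by rewrite -{1}hA J3 -mulmxA hbd bd0 mulmx0.
Qed.

Lemma lemN A B C : B *m B = 0 -> B *m C *m B = 0 -> A = B *m C + C *m B ->
  Phi A *m Phi B = 0.
Proof.
move=> hBB hBCB hA.
by rewrite hA jor mulmxDl -J3 hBCB Phi0 add0r -mulmxA -J2 hBB Phi0 mulmx0.
Qed.

End Jordan.

Section Rank.
Variables (F : fieldType) (n r : nat) (Phi : 'M[F]_n -> 'M[F]_r).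
Hypothesis two : (2%:R : F) != 0.
Hypothesis add : additive_map Phi.
Hypothesis jor : jordan_hom Phi.

Lemma R1a (x u : 'cV[F]_n) (y v : 'rV[F]_n) : y *m u = 0 -> v *m x = 0 ->
  y *m x != 0 -> Phi (x *m y) *m Phi (u *m v) = 0.
Proof.
move=> hyu hvx hyx.
set al := (y *m x) 0 0.
have al0 : al != 0.
  apply: contraNneq hyx => h; rewrite [y *m x]mx11_scalar -/al h.
  by apply/eqP/matrixP => i j; rewrite !mxE mul0rn.
have hA2 : x *m y *m (x *m y) = al *: (x *m y).
  by rewrite mulmxA -(mulmxA x y x) [y *m x]mx11_scalar mul_mx_scalar -scalemxAl.
have hA3 : x *m y *m (x *m y) *m (x *m y) = (al * al) *: (x *m y).
  by rewrite hA2 -scalemxAl hA2 scalerA.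
apply: (lemS two add jor (D := al^-1 *: (x *m y))).
- by rewrite -scalemxAl -scalemxAr scalerA hA2 scalerA -mulrA mulVf // mulr1.
- rewrite -!scalemxAl -!scalemxAr !scalerA hA3 scalerA.
  by rewrite mulrACA mulVf // mulr1 scale1r.
- by rewrite -scalemxAr !mulmxA -(mulmxA u v x) hvx mulmx0 mul0mx scaler0.
- by rewrite -scalemxAl mulmxA -(mulmxA x y u) hyu mulmx0 mul0mx scaler0.
Qed.

Lemma R1 (x u : 'cV[F]_n) (y v : 'rV[F]_n) : y *m u = 0 -> v *m x = 0 ->
  Phi (x *m y) *m Phi (u *m v) = 0.
Proof.
move=> hyu hvx.
have [hyx|/negPn/eqP hyx] := boolP (y *m x != 0); first exact: R1a.
have [hvu|/negPn/eqP hvu] := boolP (v *m u != 0).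
  rewrite (anti add jor); first by rewrite (R1a hvx hyu hvu) oppr0.
    by rewrite mulmxA -(mulmxA x y u) hyu mulmx0 mul0mx.
  by rewrite mulmxA -(mulmxA u v x) hvx mulmx0 mul0mx.
pose s i j : 'cV[F]_n := v 0 i *: delta_mx j 0 - v 0 j *: delta_mx i 0.
have vs i j : v *m s i j = 0.
  rewrite mulmxBr -!scalemxAr !vdelta !scale_scalar_mx.
  by rewrite mulrC subrr.
have ys i j : y *m s i j = (v 0 i * y 0 j - v 0 j * y 0 i)%:M.
  by rewrite mulmxBr -!scalemxAr !vdelta !scale_scalar_mx raddfB.
case: (boolP [exists i, exists j, y *m s i j != 0]).
  move/existsP => [i /existsP [j hys]].
  have ->: x *m y = (x + s i j) *m y - s i j *m y by rewrite mulmxDl addrK.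
  have h1 : v *m (x + s i j) = 0 by rewrite mulmxDr hvx vs addr0.
  have h2 : y *m (x + s i j) != 0 by rewrite mulmxDr hyx add0r.
  by rewrite (PhiB add) mulmxBl (R1a hyu h1 h2) (R1a hyu (vs i j) hys) subrr.
rewrite negb_exists => /forallP hall.
have hall' k j : v 0 k * y 0 j = v 0 j * y 0 k.
  have := hall k; rewrite negb_exists => /forallP /(_ j); rewrite negbK ys.
  move=> /eqP /matrixP /(_ 0 0); rewrite !mxE eqxx !mulr1n => /eqP.
  by rewrite subr_eq0 => /eqP.
have [hv|hv0] := boolP [exists k, v 0 k != 0]; last first.
  have ->: v = 0.
    apply/matrixP=> a b; rewrite !ord1 mxE.
    by move: hv0; rewrite negb_exists => /forallP /(_ b); rewrite negbK => /eqP.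
  by rewrite mulmx0 (Phi0 add) mulmx0.
case/existsP: hv => k hk.
have [hu|hu0] := boolP [exists m, u m 0 != 0]; last first.
  have ->: u = 0.
    apply/matrixP=> a b; rewrite !ord1 mxE.
    by move: hu0; rewrite negb_exists => /forallP /(_ a); rewrite negbK => /eqP.
  by rewrite mul0mx (Phi0 add) mulmx0.
case/existsP: hu => m hm.
pose c := y 0 k / v 0 k.
have hy : y = c *: v.
  apply/matrixP => a j; rewrite !ord1 !mxE /c.
  apply: (mulfI hk); rewrite hall'; field; exact: hk.
have hA : x *m y = (c *: x) *m v by rewrite hy -scalemxAr scalemxAl.
pose z : 'rV[F]_n := (u m 0)^-1 *: delta_mx 0 m.
have zu : z *m u = 1%:M.
  rewrite /z -scalemxAl -rowE; apply/matrixP => a b; rewrite !ord1 !mxE eqxx mulr1n.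
  by rewrite mulVf.
pose C := (c *: x) *m z.
have hBC : u *m v *m C = 0.
  by rewrite /C !mulmxA -(mulmxA u v) -(scalemxAr c v x) hvx scaler0 mulmx0 !mul0mx.
apply: (lemN two add jor (C := C)).
- by rewrite mulmxA -(mulmxA u v u) hvu mulmx0 mul0mx.
- by rewrite hBC mul0mx.
- by rewrite hBC add0r /C -mulmxA (mulmxA z) zu mul1mx hA.
Qed.

Lemma R2 A (u : 'cV[F]_n) (v : 'rV[F]_n) : A *m u = 0 -> v *m A = 0 ->
  Phi A *m Phi (u *m v) = 0.
Proof.
move=> hAu hvA.
pose Q := 1%:M - u *m pinvmx u.
have hQu : Q *m u = 0 by rewrite /Q mulmxBl mul1mx (mulmxKpV (submx_refl u)) subrr.
have hAQ : A *m Q = A by rewrite /Q mulmxBr mulmx1 mulmxA hAu mul0mx subr0.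
rewrite -hAQ (mul_col_row A Q) (Phi_sum add) mulmx_suml big1 // => k _.
apply: R1; first by rewrite rowE -mulmxA hQu mulmx0.
by rewrite colE mulmxA hvA mul0mx.
Qed.

Lemma mainJ A B : A *m B = 0 -> B *m A = 0 -> Phi A *m Phi B = 0.
Proof.
move=> hAB hBA.
pose Q := 1%:M - A *m pinvmx A.
have hBQ : B *m Q = B by rewrite /Q mulmxBr mulmx1 mulmxA hBA mul0mx subr0.
have hQA : Q *m A = 0 by rewrite /Q mulmxBl mul1mx (mulmxKpV (submx_refl A)) subrr.
rewrite -hBQ (mul_col_row B Q) (Phi_sum add) mulmx_sumr big1 // => k _.
apply: R2; first by rewrite colE mulmxA hAB mul0mx.
by rewrite rowE -mulmxA hQA mulmx0.
Qed.

End Rank.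

Theorem lemma4p1 :
  (* general field of characteristic not 2: double zero products preserved *)
  (forall (F : fieldType) (n r : nat) (Phi : 'M[F]_n -> 'M[F]_r),
     (2%:R : F) != 0 -> additive_map Phi -> jordan_hom Phi ->
     forall A B : 'M[F]_n, A *m B = 0 -> B *m A = 0 ->
       Phi A *m Phi B = 0 /\ Phi B *m Phi A = 0)
  /\
  (* complex case (any numClosedFieldType, e.g. C): self-adjoint or symmetric *)
  (forall (C : numClosedFieldType) (n r : nat) (Phi : 'M[C]_n -> 'M[C]_r),
     additive_map Phi -> jordan_hom Phi ->
     forall A B : 'M[C]_n,
       (self_adjoint A /\ self_adjoint B) \/ (symmetric_mx A /\ symmetric_mx B) ->
       A *m B = 0 -> Phi A *m Phi B = 0)
  /\
  (* real case (any realFieldType, e.g. R): self-adjoint = symmetric *)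
  (forall (R : realFieldType) (n r : nat) (Phi : 'M[R]_n -> 'M[R]_r),
     additive_map Phi -> jordan_hom Phi ->
     forall A B : 'M[R]_n, symmetric_mx A -> symmetric_mx B ->
       A *m B = 0 -> Phi A *m Phi B = 0).
Proof.
split; [|split].
- move=> F n r Phi two add jor A B hAB hBA; split; exact: mainJ.
- move=> C n r Phi add jor A B hsa hAB.
  have two : (2%:R : C) != 0 by rewrite pnatr_eq0.
  apply: (mainJ two add jor hAB).
  case: hsa => [[hA hB]|[hA hB]].
    rewrite /self_adjoint in hA hB.
    rewrite -hA -hB /adjmx -trmx_mul -map_mxM hAB.
    by apply/matrixP => i j; rewrite !mxE rmorph0.
  rewrite /symmetric_mx in hA hB.
  by rewrite -hA -hB -trmx_mul hAB trmx0.
- move=> R n r Phi add jor A B hA hB hAB.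
  have two : (2%:R : R) != 0 by rewrite pnatr_eq0.
  apply: (mainJ two add jor hAB).
  rewrite /symmetric_mx in hA hB.
  by rewrite -hA -hB -trmx_mul hAB trmx0.
Qed.
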